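(* Let $n\ge 3$ and let $K_{n+1}=(V,E)$ be the complete graph on $V=\{0,\dots,n\}$. Then $\dim P^3_{[0,n]}(K_{n+1})=|E|-n-2$.
   Context: For an undirected graph $G=(V,E)$ with $V=\{0,\dots,n\}$, a $[0,n]$-$p$-path is a simple (undirected) path from $0$ to $n$ with exactly $p$ edges, and $P^p_{[0,n]}(G)\subseteq\mathbb{R}^E$ is the convex hull of the incidence vectors of all $[0,n]$-$p$-paths in $G$. *)

(* Defs.v *)
From HB Require Import structures.
From mathcomp Require Import all_boot all_order all_algebra.
Set Implicit Arguments. Unset Strict Implicit. Unset Printing Implicit Defensive.
Import Order.TTheory GRing.Theory Num.Theory.
Local Open Scope ring_scope.

(* Vertices of a graph on V = {0,...,n} are 'I_n.+1; vertex 0 is ord0,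
   vertex n is ord_max. An (undirected) edge is a 2-element vertex set. *)
Definition edge (n : nat) := {e : {set 'I_n.+1} | #|e| == 2%N}.

Definition complete_graph (n : nat) : {set edge n} := [set: edge n].

Definition is_p_path (n p : nat) (G : {set edge n}) (s : seq 'I_n.+1) : Prop :=
  [/\ size s = p.+1, uniq s, head ord0 s = ord0, last ord0 s = ord_max &
      forall i, (i < p)%N ->
        exists2 e : edge n, e \in G & val e = [set nth ord0 s i; nth ord0 s i.+1]].

Definition path_edges (n : nat) (s : seq 'I_n.+1) : {set edge n} :=
  [set e : edge n | [exists i : 'I_(size s).-1,
                      val e == [set nth ord0 s i; nth ord0 s i.+1]]].

Definition incvec (R : realFieldType) (n : nat) (S : {set edge n})
  : {ffun edge n -> R^o} := [ffun e => if e \in S then 1 else 0].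

Definition conv_hull (R : realFieldType) (V : lmodType R) (X : V -> Prop) : V -> Prop :=
  fun x => exists k (y : 'I_k -> V) (w : 'I_k -> R),
    [/\ forall i, X (y i), forall i, 0 <= w i, \sum_i w i = 1 &
        x = \sum_i w i *: y i].

Definition path_polytope (R : realFieldType) (n p : nat) (G : {set edge n})
  : {ffun edge n -> R^o} -> Prop :=
  conv_hull (fun x => exists s, is_p_path p G s /\ x = incvec R (path_edges s)).

Definition aff_indep (R : realFieldType) (V : lmodType R) (k : nat) (y : 'I_k -> V) : Prop :=
  forall c : 'I_k -> R, \sum_i c i = 0 -> \sum_i c i *: y i = 0 -> forall i, c i = 0.

Definition has_dim (R : realFieldType) (V : lmodType R) (X : V -> Prop) (d : nat) : Prop :=
  (exists y : 'I_d.+1 -> V, (forall i, X (y i)) /\ aff_indep y) /\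
  (forall k (y : 'I_k -> V), (forall i, X (y i)) -> aff_indep y -> (k <= d.+1)%N).

(* Main.v *)
Require Import Defs.
From mathcomp Require Import all_boot all_order all_algebra.
From mathcomp Require Import zify ring lra.
Set Implicit Arguments. Unset Strict Implicit. Unset Printing Implicit Defensive.
Import Order.TTheory GRing.Theory Num.Theory.
Local Open Scope ring_scope.


Definition lin (R : realFieldType) (n : nat) (G : {set 'I_n.+1} -> R)
  (x : {ffun edge n -> R^o}) : R := \sum_e G (val e) * x e.

Lemma lin_comb (R : realFieldType) (n k : nat) (G : {set 'I_n.+1} -> R)
  (w : 'I_k -> R) (y : 'I_k -> {ffun edge n -> R^o}) :
  lin G (\sum_i w i *: y i) = \sum_i w i * lin G (y i).
Proof.
rewrite /lin.
under eq_bigr => e _ do rewrite sum_ffunE mulr_sumr.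
rewrite exchange_big; apply: eq_bigr => i _; rewrite mulr_sumr.
apply: eq_bigr => e _; rewrite ffunE /=.
by rewrite mulrCA.
Qed.

Lemma lin_conv (R : realFieldType) (n : nat) (G : {set 'I_n.+1} -> R) (X : {ffun edge n -> R^o} -> Prop) (kap : R) x :
  (forall y, X y -> lin G y = kap) -> conv_hull X x -> lin G x = kap.
Proof.
move=> HX [k [y [w [Hy Hw Hs ->]]]].
rewrite lin_comb.
under eq_bigr => i _ do rewrite HX //.
by rewrite -mulr_suml Hs mul1r.
Qed.



Definition pv (R : realFieldType) (n : nat) (a b : 'I_n.+1) : {ffun edge n -> R^o} :=
  incvec R (path_edges [:: ord0; a; b; ord_max]).

Lemma pe_mem (n : nat) (x0 x1 x2 x3 : 'I_n.+1) (e : edge n) :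
  (e \in path_edges [:: x0; x1; x2; x3]) =
  [|| val e == [set x0; x1], val e == [set x1; x2] | val e == [set x2; x3]].
Proof.
rewrite inE; apply/existsP/idP.
  by case=> -[[|[|[|i]]] Hi] //= ->; rewrite ?orbT.
case/or3P=> H.
- by exists (@Ordinal 3 0 isT).
- by exists (@Ordinal 3 1 isT).
- by exists (@Ordinal 3 2 isT).
Qed.

Definition mkE (n : nat) (S : {set 'I_n.+1}) (h : #|S| == 2%N) : edge n := exist _ S h.

Lemma sum_single (R : realFieldType) (n : nat) (G : {set 'I_n.+1} -> R) (S : {set 'I_n.+1}) :
  #|S| = 2%N -> \sum_(e : edge n) G (val e) * (val e == S)%:R = G S.
Proof.
move=> hS; have hS' : #|S| == 2%N by rewrite hS.
rewrite (bigD1 (mkE hS')) //= eqxx mulr1 big1 ?addr0 // => e He.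
case: eqP => [E|_]; last by rewrite mulr0.
by case/eqP: He; apply: val_inj.
Qed.

Lemma lin_pv (R : realFieldType) (n : nat) (G : {set 'I_n.+1} -> R) (a b : 'I_n.+1) :
  a != ord0 -> a != ord_max -> b != ord0 -> b != ord_max -> a != b ->
  (0 < n)%N ->
  lin G (pv R a b) = G [set ord0; a] + G [set a; b] + G [set b; ord_max].
Proof.
move=> a0 an b0 bn ab n0.
have h0n : (ord0 : 'I_n.+1) != ord_max.
  by apply/eqP => /(congr1 val) /= E; move: n0; rewrite -E.
have d12 : [set ord0; a] != [set a; b].
  apply/negP => /eqP E; have : (ord0 : 'I_n.+1) \in [set a; b] by rewrite -E set21.
  by rewrite in_set2 !(eq_sym ord0) (negbTE a0) (negbTE b0).
have d13 : [set ord0; a] != [set b; ord_max].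
  apply/negP => /eqP E; have : (ord0 : 'I_n.+1) \in [set b; ord_max] by rewrite -E set21.
  by rewrite in_set2 (negbTE h0n) orbF eq_sym (negbTE b0).
have d23 : [set a; b] != [set b; ord_max].
  apply/negP => /eqP E; have : (a : 'I_n.+1) \in [set b; ord_max] by rewrite -E set21.
  by rewrite in_set2 (negbTE ab) (negbTE an).
rewrite /lin.
have -> : \sum_(e : edge n) G (val e) * pv R a b e = \sum_(e : edge n) (G (val e) * (val e == [set ord0; a])%:R
    + G (val e) * (val e == [set a; b])%:R + G (val e) * (val e == [set b; ord_max])%:R).
  apply: eq_bigr => e _; rewrite /pv /incvec ffunE pe_mem -!mulrDr; congr (_ * _).
  case: (eqVneq (val e) [set ord0; a]) => [E|_].
    by rewrite E (negbTE d12) (negbTE d13) /= !addr0.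
  case: (eqVneq (val e) [set a; b]) => [E|_].
    by rewrite E (negbTE d23) /= add0r addr0.
  by case: (eqVneq (val e) [set b; ord_max]) => [_|_] /=; rewrite ?add0r ?addr0.
by rewrite !big_split /= !sum_single // cards2 ?bn ?ab // eq_sym a0.
Qed.



Definition inner (n : nat) (a b : 'I_n.+1) :=
  [&& a != ord0, a != ord_max, b != ord0, b != ord_max & a != b].

Lemma path3_shape (n : nat) (G : {set edge n}) (s : seq 'I_n.+1) :
  is_p_path 3 G s -> exists a b, s = [:: ord0; a; b; ord_max] /\ inner a b.
Proof.
case=> hsz hu hh hl _.
case: s hsz hu hh hl => [|x0 [|x1 [|x2 [|x3 [|x4 s]]]]] //= _.
move=> hu E0 E3; subst x0 x3; exists x1, x2; split => //.
move: hu; rewrite /= !inE !negb_or -!andbA.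
case/and5P=> h01 h02 h03 h12 /andP[h13 /andP[h23 _]].
by rewrite /inner eq_sym h01 h13 eq_sym h02 h23 h12.
Qed.

Lemma ord0_max (n : nat) : (0 < n)%N -> (ord0 : 'I_n.+1) != ord_max.
Proof. by move=> n0; apply/eqP => /(congr1 val) /= E; move: n0; rewrite -E. Qed.

Lemma pv_poly (R : realFieldType) (n : nat) (a b : 'I_n.+1) :
  (0 < n)%N -> inner a b -> @path_polytope R n 3 (complete_graph n) (pv R a b).
Proof.
move=> n0 /and5P[a0 an b0 bn ab].
have h0n := ord0_max n0.
exists 1%N, (fun _ => pv R a b), (fun _ => 1); split => //.
- move=> _; exists [:: ord0; a; b; ord_max]; split => //; split => //.
  + by rewrite /= !inE !negb_or eq_sym a0 eq_sym b0 h0n ab an bn.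
  + move=> i hi.
    have mk : forall x y : 'I_n.+1, x != y -> exists2 e : edge n, e \in complete_graph n & val e = [set x; y].
      move=> x y hxy; have h : #|[set x; y]| == 2%N by rewrite cards2 hxy.
      by exists (mkE h); rewrite // /complete_graph inE.
    case: i hi => [|[|[|i]]] // _ /=; apply: mk => //; by rewrite eq_sym.
- by rewrite big_ord1.
- by rewrite big_ord1 scale1r.
Qed.

Definition G1 (n : nat) (R : realFieldType) (S : {set 'I_n.+1}) : R :=
  ((ord0 \in S) && (ord_max \in S))%:R.
Definition G2 (n : nat) (R : realFieldType) (S : {set 'I_n.+1}) : R := (ord0 \in S)%:R.
Definition G3 (n : nat) (R : realFieldType) (S : {set 'I_n.+1}) : R :=
  ((ord0 \notin S) && (ord_max \notin S))%:R.
Definition G4 (n : nat) (R : realFieldType) (v : 'I_n.+1) (S : {set 'I_n.+1}) : R :=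
  if v \in S then (if (ord0 \in S) || (ord_max \in S) then 1 else -1) else 0.

Lemma poly_lin (R : realFieldType) (n : nat) (G : {set 'I_n.+1} -> R) (kap : R) x :
  (0 < n)%N ->
  (forall a b : 'I_n.+1, inner a b -> G [set ord0; a] + G [set a; b] + G [set b; ord_max] = kap) ->
  @path_polytope R n 3 (complete_graph n) x -> lin G x = kap.
Proof.
move=> n0 HG; apply: lin_conv => y [s [/path3_shape [a [b [-> hab]]] ->]].
move: (hab) => /and5P[a0 an b0 bn ab].
by rewrite -(HG a b hab) (lin_pv G a0 an b0 bn ab n0).
Qed.

Lemma val_G1 (R : realFieldType) (n : nat) (a b : 'I_n.+1) : (0 < n)%N -> inner a b ->
  G1 R [set ord0; a] + G1 R [set a; b] + G1 R [set b; ord_max] = 0.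
Proof.
move=> n0 /and5P[a0 an b0 bn ab]; have h0n := ord0_max n0.
rewrite /G1 !in_set2 !eqxx /= !orbT /=.
rewrite (eq_sym ord_max) (negbTE h0n) (eq_sym ord_max a) (negbTE an).
rewrite (eq_sym ord0 a) (negbTE a0) (eq_sym ord0 b) (negbTE b0) /=.
by rewrite !addr0.
Qed.

Lemma val_G2 (R : realFieldType) (n : nat) (a b : 'I_n.+1) : (0 < n)%N -> inner a b ->
  G2 R [set ord0; a] + G2 R [set a; b] + G2 R [set b; ord_max] = 1.
Proof.
move=> n0 /and5P[a0 an b0 bn ab]; have h0n := ord0_max n0.
rewrite /G2 !in_set2 !eqxx /= (negbTE h0n).
rewrite (eq_sym ord0 a) (negbTE a0) (eq_sym ord0 b) (negbTE b0) /=.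
by rewrite !addr0.
Qed.

Lemma val_G3 (R : realFieldType) (n : nat) (a b : 'I_n.+1) : (0 < n)%N -> inner a b ->
  G3 R [set ord0; a] + G3 R [set a; b] + G3 R [set b; ord_max] = 1.
Proof.
move=> n0 /and5P[a0 an b0 bn ab]; have h0n := ord0_max n0.
rewrite /G3 !in_set2 !eqxx /= !orbT /=.
rewrite (eq_sym ord_max a) (negbTE an) (eq_sym ord_max b) (negbTE bn).
rewrite (eq_sym ord0 a) (negbTE a0) (eq_sym ord0 b) (negbTE b0) /=.
by rewrite andbF add0r addr0.
Qed.

Lemma val_G4 (R : realFieldType) (n : nat) (v a b : 'I_n.+1) : (0 < n)%N -> inner a b ->
  v != ord0 -> v != ord_max ->
  G4 R v [set ord0; a] + G4 R v [set a; b] + G4 R v [set b; ord_max] = 0.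
Proof.
move=> n0 /and5P[a0 an b0 bn ab] v0 vn; have h0n := ord0_max n0.
rewrite /G4 !in_set2 !eqxx /= !orbT /= (negbTE v0) (negbTE vn) /=.
rewrite (eq_sym ord_max a) (negbTE an) (eq_sym ord_max b) (negbTE bn).
rewrite (eq_sym ord0 a) (negbTE a0) (eq_sym ord0 b) (negbTE b0) /=.
case: (eqVneq v a) => [->|va]; first by rewrite (negbTE ab) /= addrN add0r.
case: (eqVneq v b) => [_|vb] /=; first by rewrite add0r addNr.
by rewrite !addr0.
Qed.





Lemma solve1 (R : realFieldType) (n : nat) (G : {set 'I_n.+1} -> R) (z : {ffun edge n -> R^o}) (e0 : edge n) :
  lin G z = 0 -> (forall e, e != e0 -> G (val e) * z e = 0) -> G (val e0) != 0 -> z e0 = 0.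
Proof.
move=> Hl Ho HG; move: Hl; rewrite /lin (bigD1 e0) //= big1 ?addr0; last by move=> e /Ho.
by move=> /eqP; rewrite mulf_eq0 (negbTE HG) => /eqP.
Qed.

Lemma two2 (n : nat) (S : {set 'I_n.+1}) x y :
  #|S| = 2%N -> x != y -> x \in S -> y \in S -> S = [set x; y].
Proof.
move=> hS hxy hx hy; apply/eqP; rewrite eq_sym eqEcard subUset !sub1set hx hy.
by rewrite cards2 hxy hS.
Qed.

Lemma card_e (n : nat) (e : edge n) : #|val e| = 2%N.
Proof. exact: eqP (valP e). Qed.

Lemma same_e (n : nat) (e e' : edge n) x y :
  x != y -> x \in val e -> y \in val e -> x \in val e' -> y \in val e' -> e' = e.
Proof.
move=> hxy h1 h2 h3 h4; apply: val_inj.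
by rewrite (two2 (card_e e) hxy h1 h2) (two2 (card_e e') hxy h3 h4).
Qed.

Lemma three_e (n : nat) (e : edge n) x y w :
  x != y -> w != x -> w != y -> x \in val e -> y \in val e -> w \in val e -> False.
Proof.
move=> hxy hwx hwy h1 h2 h3; move: h3; rewrite (two2 (card_e e) hxy h1 h2) in_set2.
by rewrite (negbTE hwx) (negbTE hwy).
Qed.

Definition Fp (n : nat) (v1 v2 : 'I_n.+1) (S : {set 'I_n.+1}) :=
  [&& ord_max \notin S, ~~ ((ord0 \in S) && (v1 \in S)) & ~~ ((v1 \in S) && (v2 \in S))].

Lemma zero_all (R : realFieldType) (n : nat) (v1 v2 : 'I_n.+1) (z : {ffun edge n -> R^o}) :
  ord0 != v1 -> ord0 != v2 -> (ord0 : 'I_n.+1) != ord_max -> v1 != v2 -> v1 != ord_max -> v2 != ord_max ->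
  lin (@G1 n R) z = 0 -> lin (@G2 n R) z = 0 -> lin (@G3 n R) z = 0 ->
  (forall v, v != ord0 -> v != ord_max -> lin (G4 R v) z = 0) ->
  (forall e, Fp v1 v2 (val e) -> z e = 0) ->
  forall e, z e = 0.
Proof.
move=> h01 h02 h0n h12 h1n h2n H1 H2 H3 H4 HF.
have S1 : forall e : edge n, ord0 \in val e -> ord_max \in val e -> z e = 0.
  move=> e i0 iN; apply: (solve1 H1).
    move=> e' ne; rewrite /G1; case: (boolP ((ord0 \in val e') && (ord_max \in val e'))) => [/andP[j0 jN]|_].
      by case/eqP: ne; apply: (same_e h0n).
    by rewrite mul0r.
  by rewrite /G1 i0 iN oner_eq0.
have S2 : forall e : edge n, v1 \in val e -> v2 \in val e -> z e = 0.
  move=> e i1 i2; apply: (solve1 H3).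
    move=> e' ne; rewrite /G3; case: (boolP ((ord0 \notin val e') && (ord_max \notin val e'))) => [/andP[j0 jN]|_]; last by rewrite mul0r.
    case: (boolP ((v1 \in val e') && (v2 \in val e'))) => [/andP[j1 j2]|nj].
      by case/eqP: ne; apply: (same_e h12).
    by rewrite HF ?mulr0 // /Fp jN nj (negbTE j0).
  rewrite /G3 (two2 (card_e e) h12 i1 i2) !in_set2 (negbTE h01) (negbTE h02).
  by rewrite !(eq_sym ord_max) (negbTE h1n) (negbTE h2n) oner_eq0.
have S3 : forall e : edge n, ord0 \in val e -> v1 \in val e -> z e = 0.
  move=> e i0 i1; apply: (solve1 H2).
    move=> e' ne; rewrite /G2; case: (boolP (ord0 \in val e')) => [j0|_]; last by rewrite mul0r.
    case: (boolP (ord_max \in val e')) => [jN|nN]; first by rewrite S1 ?mulr0.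
    case: (boolP (v1 \in val e')) => [j1|n1].
      by case/eqP: ne; apply: (same_e h01).
by rewrite HF ?mulr0 // /Fp nN j0 !(negbTE n1).
  by rewrite /G2 i0 oner_eq0.
have noN : forall e : edge n, ord_max \notin val e -> z e = 0.
  move=> e nN; case: (boolP ((ord0 \in val e) && (v1 \in val e))) => [/andP[j0 j1]|n01]; first exact: S3.
  case: (boolP ((v1 \in val e) && (v2 \in val e))) => [/andP[j1 j2]|n12]; first exact: S2.
  by apply: HF; rewrite /Fp nN n01 n12.
have S4 : forall (v : 'I_n.+1) (e : edge n), v != ord0 -> v != ord_max -> v \in val e -> ord_max \in val e -> z e = 0.
  move=> v e v0 vN iv iN; apply: (solve1 (H4 v v0 vN)).
    move=> e' ne; rewrite /G4; case: (boolP (v \in val e')) => [jv|_]; last by rewrite mul0r.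
    case: (boolP (ord_max \in val e')) => [jN|nN]; first by case/eqP: ne; apply: (same_e vN).
    by rewrite noN ?mulr0.
  by rewrite /G4 iv iN orbT oner_eq0.
move=> e; case: (boolP (ord_max \in val e)) => [iN|]; last exact: noN.
have /cards2P [x [y [hxy Exy]]] : #|val e| == 2%N by rewrite card_e.
have [v [iv vN]] : exists v, v \in val e /\ v != ord_max.
  move: iN; rewrite Exy in_set2 => /orP[/eqP E|/eqP E].
    by exists y; rewrite in_set2 eqxx orbT E eq_sym.
  by exists x; rewrite in_set2 eqxx E.
case: (eqVneq v ord0) => [E|v0]; first by apply: S1; rewrite -?E.
exact: (S4 v).
Qed.



Definition v1 (n : nat) : 'I_n.+1 := inord 1.
Definition v2 (n : nat) : 'I_n.+1 := inord 2.

Definition Fset (n : nat) : {set edge n} := [set e : edge n | Fp (v1 n) (v2 n) (val e)].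

Lemma verts (n : nat) : (3 <= n)%N ->
  [/\ (ord0 : 'I_n.+1) != v1 n, (ord0 : 'I_n.+1) != v2 n, (ord0 : 'I_n.+1) != ord_max,
      v1 n != v2 n & (v1 n != ord_max) && (v2 n != ord_max)].
Proof.
move=> hn; rewrite /v1 /v2 -!(inj_eq val_inj) /= !inordK //; try lia.
by split; try (apply/andP; split); apply/eqP; lia.
Qed.

Lemma lin_aff (R : realFieldType) (n k : nat) (G : {set 'I_n.+1} -> R) (kap : R)
  (y : 'I_k -> {ffun edge n -> R^o}) (c : 'I_k -> R) :
  (forall i, lin G (y i) = kap) -> \sum_i c i = 0 -> lin G (\sum_i c i *: y i) = 0.
Proof.
move=> Hy Hc; rewrite lin_comb.
under eq_bigr => i _ do rewrite Hy.
by rewrite -mulr_suml Hc mul0r.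
Qed.

Lemma upper (R : realFieldType) (n : nat) (hn : (3 <= n)%N) k (y : 'I_k -> {ffun edge n -> R^o}) :
  (forall i, @path_polytope R n 3 (complete_graph n) (y i)) -> aff_indep y ->
  (k <= #|Fset n|.+1)%N.
Proof.
move=> Hy Hai.
have n0 : (0 < n)%N by lia.
have [h01 h02 h0n h12 /andP[h1n h2n]] := verts hn.
pose M : 'M[R]_(k, #|Fset n|) := \matrix_(i, j) y i (enum_val j).
pose A : 'M[R]_(k, 1 + #|Fset n|) := row_mx (const_mx 1) M.
have key : forall u : 'rV_k, u *m A = 0 -> u = 0.
  move=> u /eqP; rewrite mul_mx_row row_mx_eq0 => /andP[/eqP Hs /eqP HM].
  pose c i := u 0 i.
  have sc : \sum_i c i = 0.
    have := congr1 (fun B : 'M[R]_(1,1) => B 0 0) Hs; rewrite !mxE /= => H; rewrite -[RHS]H.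
    by apply: eq_bigr => i _; rewrite mxE mulr1.
  pose z := \sum_i c i *: y i.
  have zF : forall e, Fp (v1 n) (v2 n) (val e) -> z e = 0.
    move=> e he; have he' : e \in Fset n by rewrite inE.
    have := congr1 (fun B : 'M[R]_(1, #|Fset n|) => B 0 (enum_rank_in he' e)) HM; rewrite !mxE /= => H; rewrite -[RHS]H.
    rewrite /z sum_ffunE; apply: eq_bigr => i _.
    by rewrite ffunE mxE enum_rankK_in.
  have z0 : forall e, z e = 0.
    apply: (zero_all h01 h02 h0n h12 h1n h2n) => //.
    - apply: (lin_aff (kap := 0)) => // i; apply: poly_lin (Hy i) => // a b hab; exact: val_G1.
    - apply: (lin_aff (kap := 1)) => // i; apply: poly_lin (Hy i) => // a b hab; exact: val_G2.
    - apply: (lin_aff (kap := 1)) => // i; apply: poly_lin (Hy i) => // a b hab; exact: val_G3.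
    - move=> v hv0 hvn.
      apply: (lin_aff (kap := 0)) => // i; apply: poly_lin (Hy i) => // a b hab; exact: val_G4.
  have zz : \sum_i c i *: y i = 0 by apply/ffunP => e; rewrite ffunE; exact: z0.
  have := Hai c sc zz.
  by move=> Hc; apply/rowP => i; rewrite mxE; exact: Hc.
have fr : row_free A.
  rewrite -kermx_eq0; apply/eqP/row_matrixP => r; rewrite row0.
  apply: key; by rewrite -row_mul mulmx_ker row0.
by move: (rank_leq_col A); move/eqP: fr => ->.
Qed.



Lemma wneq (n : nat) (i : 'I_n) : widen_ord (leqnSn n) i != ord_max.
Proof. by rewrite -(inj_eq val_inj) /=; apply/eqP => E; move: (ltn_ord i); rewrite E ltnn. Qed.

Lemma eN_card (n : nat) (i : 'I_n) : #|[set widen_ord (leqnSn n) i; ord_max]| == 2%N.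
Proof. by rewrite cards2 wneq. Qed.

Definition eN (n : nat) (i : 'I_n) : edge n := mkE (eN_card i).

Lemma eN_inj (n : nat) : injective (@eN n).
Proof.
move=> i j /(congr1 val) /= E.
have : widen_ord (leqnSn n) i \in [set widen_ord (leqnSn n) j; ord_max] by rewrite -E set21.
rewrite in_set2 (negbTE (wneq i)) orbF => /eqP /(congr1 val) /= h.
exact: ord_inj.
Qed.

Lemma cardN (n : nat) : #|[set e : edge n | ord_max \in val e]| = n.
Proof.
transitivity #|[set eN i | i : 'I_n]|; last by rewrite card_imset ?card_ord //; exact: eN_inj.
apply: eq_card => e; rewrite inE; apply/idP/imsetP.
  move=> iN.
  have /cards2P [x [y [hxy Exy]]] : #|val e| == 2%N by rewrite card_e.
  have [v [iv vN]] : exists v, v \in val e /\ v != ord_max.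
    move: iN; rewrite Exy in_set2 => /orP[/eqP E|/eqP E].
      by exists y; rewrite in_set2 eqxx orbT E eq_sym.
    by exists x; rewrite in_set2 eqxx E.
  have vn : (v < n)%N.
    have := ltn_ord v; rewrite ltnS leq_eqVlt => /orP[/eqP E|//].
    by case/eqP: vN; apply: ord_inj.
  exists (Ordinal vn) => //; apply: val_inj => /=.
  rewrite (two2 (card_e e) vN iv iN); congr [set _; _]; exact: ord_inj.
by case=> i _ ->; rewrite /= set22.
Qed.

Definition e01c (n : nat) (h : (3 <= n)%N) : #|[set (ord0 : 'I_n.+1); v1 n]| == 2%N.
Proof. by case: (verts h) => h01 _ _ _ _; rewrite cards2 h01. Qed.
Definition e12c (n : nat) (h : (3 <= n)%N) : #|[set v1 n; v2 n]| == 2%N.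
Proof. by case: (verts h) => _ _ _ h12 _; rewrite cards2 h12. Qed.

Lemma cardE (n : nat) (h : (3 <= n)%N) : #|complete_graph n| = (#|Fset n| + 2 + n)%N.
Proof.
rewrite /complete_graph cardsT.
have [h01 h02 h0n h12 /andP[h1n h2n]] := verts h.
set N := [set e : edge n | ord_max \in val e].
rewrite -(cardsC N) cardN addnC; congr (_ + _)%N.
rewrite -(cardsID (Fset n) (~: N)).
have -> : ~: N :&: Fset n = Fset n.
  apply/setIidPr/subsetP => e; rewrite !inE /Fp; by case/and3P.
congr (_ + _)%N.
have -> : ~: N :\: Fset n = [set mkE (e01c h); mkE (e12c h)].
  apply/setP => e; rewrite !inE /Fp; apply/idP/idP.
    case/andP=> hF hN; move: hF; rewrite hN /= negb_and !negbK.
    case/orP => /andP[j1 j2].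
      by apply/orP; left; apply/eqP; apply: (same_e h01) => //=; rewrite ?set21 ?set22.
    by apply/orP; right; apply/eqP; apply: (same_e h12) => //=; rewrite ?set21 ?set22.
  case/orP => /eqP -> /=; rewrite !in_set2 !eqxx /=.
    by rewrite !orbT /= andbF /= !(eq_sym ord_max) (negbTE h0n) (negbTE h1n).
  by rewrite !orbT /= !andbF /= !(eq_sym ord_max) (negbTE h1n) (negbTE h2n).
rewrite cards2; apply/eqP; rewrite eqSS eqb1.
apply/eqP => /(congr1 val) /= E.
have : (ord0 : 'I_n.+1) \in [set v1 n; v2 n] by rewrite -E set21.
by rewrite in_set2 (negbTE h01) (negbTE h02).
Qed.



Lemma other (n : nat) (S : {set 'I_n.+1}) w :
  #|S| = 2%N -> w \in S -> exists w', w != w' /\ S = [set w; w'].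
Proof.
move=> hS; have /cards2P [x [y [hxy ->]]] : #|S| == 2%N by rewrite hS.
rewrite in_set2 => /orP[/eqP ->|/eqP ->]; first by exists y.
by exists x; rewrite setUC eq_sym.
Qed.

Lemma pp_ex (n : nat) (f : edge n) : exists p : 'I_n.+1 * 'I_n.+1,
  [&& val f == [set p.1; p.2], p.1 != p.2, (ord0 \in val f) ==> (p.1 == ord0) &
      ((ord0 \notin val f) && (v1 n \in val f)) ==> (p.1 == v1 n)].
Proof.
have hc := card_e f.
case: (boolP (ord0 \in val f)) => [i0|n0].
  have [w [hw E]] := other hc i0.
  by exists (ord0, w); rewrite /= E !eqxx hw /= ?implybT ?andbT.
case: (boolP (v1 n \in val f)) => [i1|n1].
  have [w [hw E]] := other hc i1.
  by exists (v1 n, w); rewrite /= E !eqxx hw /= ?implybT ?andbT.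
have /cards2P [x [y [hxy E]]] : #|val f| == 2%N by rewrite hc.
by exists (x, y); rewrite /= E !eqxx hxy /= ?implybT ?andbT.
Qed.

Definition pp (n : nat) (f : edge n) := xchoose (pp_ex f).

Lemma pp_spec (n : nat) (f : edge n) :
  [/\ val f = [set (pp f).1; (pp f).2], (pp f).1 != (pp f).2,
      ord0 \in val f -> (pp f).1 = ord0 &
      ord0 \notin val f -> v1 n \in val f -> (pp f).1 = v1 n].
Proof.
case/and4P: (xchooseP (pp_ex f)) => /eqP h1 h2 /implyP h3 /implyP h4; split => //.
- by move=> /h3 /eqP.
- by move=> a b; apply/eqP/h4; rewrite a b.
Qed.

Definition pa (n : nat) (f : edge n) := if ord0 \in val f then (pp f).2 else (pp f).1.
Definition pb (n : nat) (f : edge n) := if ord0 \in val f then v1 n else (pp f).2.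
Definition PV (R : realFieldType) (n : nat) (f : edge n) := pv R (pa f) (pb f).

Lemma PV_mem (R : realFieldType) (n : nat) (f g : edge n) :
  PV R f g = ([|| val g == [set ord0; pa f], val g == [set pa f; pb f] |
                  val g == [set pb f; ord_max]])%:R.
Proof. by rewrite /PV /pv /incvec ffunE pe_mem; case: ifP. Qed.

Lemma mem_of (n : nat) (S : {set 'I_n.+1}) x y : S = [set x; y] -> x \in S /\ y \in S.
Proof. by move=> ->; rewrite set21 set22. Qed.

Lemma pab_inner (n : nat) (h : (3 <= n)%N) (f : edge n) : Fp (v1 n) (v2 n) (val f) -> inner (pa f) (pb f).
Proof.
have [h01 h02 h0n h12 /andP[h1n h2n]] := verts h.
case: (pp_spec f) => E hne H0 H1.
have [m1 m2] := mem_of E.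
rewrite /Fp /inner /pa /pb => /and3P[nN n01 n12].
have neqN : forall x, x \in val f -> x != ord_max.
  by move=> x hx; apply/eqP => ex; move: nN; rewrite -ex hx.
case: (boolP (ord0 \in val f)) => [i0|n0].
  have e1 := H0 i0.
  have p20 : (pp f).2 != ord0 by rewrite -e1 eq_sym.
  rewrite p20 (neqN _ m2) (eq_sym (v1 n)) h01 h1n /=; apply/eqP => e2; move: n01; by rewrite i0 -e2 m2.
have ne0 : forall x, x \in val f -> x != ord0.
  by move=> x hx; apply/eqP => ex; move: n0; rewrite -ex hx.
by rewrite (ne0 _ m1) (neqN _ m1) (ne0 _ m2) (neqN _ m2) hne.
Qed.

Lemma PV_self (R : realFieldType) (n : nat) (f : edge n) : PV R f f = 1.
Proof.
rewrite PV_mem /pa /pb; case: (pp_spec f) => E hne H0 H1.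
case: (boolP (ord0 \in val f)) => [i0|n0].
  by rewrite {1}E (H0 i0) eqxx.
by rewrite {2}E eqxx orbT.
Qed.

Lemma solve2 (R : realFieldType) (I : finType) (c Q : I -> R) (j0 : I) :
  \sum_j c j * Q j = 0 -> (forall j, j != j0 -> c j * Q j = 0) -> Q j0 != 0 -> c j0 = 0.
Proof.
move=> Hl Ho HG; move: Hl; rewrite (bigD1 j0) //= big1 ?addr0; last by move=> e /Ho.
by move=> /eqP; rewrite mulf_eq0 (negbTE HG) orbF => /eqP.
Qed.



Definition ylow (R : realFieldType) (n : nat) (i : 'I_(#|Fset n|).+1) : {ffun edge n -> R^o} :=
  if unlift ord0 i is Some j then PV R (enum_val j) else pv R (v1 n) (v2 n).

Lemma neq_in (n : nat) (S : {set 'I_n.+1}) x u w :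
  x \notin S -> x \in [set u; w] -> (S == [set u; w]) = false.
Proof. by move=> h1 h2; apply/negbTE/negP => /eqP E; move: h1; rewrite E h2. Qed.

Lemma neq_out (n : nat) (S : {set 'I_n.+1}) x u w :
  x \in S -> x \notin [set u; w] -> (S == [set u; w]) = false.
Proof. by move=> h1 h2; apply/negbTE/negP => /eqP E; move: h2; rewrite -E h1. Qed.

Lemma FsetP (n : nat) (j : 'I_#|Fset n|) : Fp (v1 n) (v2 n) (val (enum_val j)).
Proof. by have := enum_valP j; rewrite inE. Qed.

Lemma ylow0 (R : realFieldType) (n : nat) : @ylow R n ord0 = pv R (v1 n) (v2 n).
Proof. by rewrite /ylow unlift_none. Qed.

Lemma ylow_lift (R : realFieldType) (n : nat) (j : 'I_#|Fset n|) :
  @ylow R n (lift ord0 j) = PV R (enum_val j).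
Proof. by rewrite /ylow liftK. Qed.

Lemma lower (R : realFieldType) (n : nat) (h : (3 <= n)%N) :
  (forall i, @path_polytope R n 3 (complete_graph n) (@ylow R n i)) /\ aff_indep (@ylow R n).
Proof.
have n0 : (0 < n)%N by lia.
have [h01 h02 h0n h12 /andP[h1n h2n]] := verts h.
split.
  move=> i; rewrite /ylow; case: (unlift ord0 i) => [j|].
    by apply: pv_poly => //; apply: pab_inner => //; exact: FsetP.
  by apply: pv_poly => //; rewrite /inner !(eq_sym _ ord0) h01 h02 h1n h2n h12.
move=> c Hs Hz.
pose c' (j : 'I_#|Fset n|) := c (lift ord0 j).
have coord : forall g : edge n, Fp (v1 n) (v2 n) (val g) ->
    \sum_j c' j * PV R (enum_val j) g = 0.
  move=> g Fg; have := congr1 (fun x : {ffun edge n -> R^o} => x g) Hz.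
  rewrite /= sum_ffunE big_ord_recl ylow0.
  have -> : \sum_(i < #|Fset n|) (c (lift ord0 i) *: @ylow R n (lift ord0 i)) g =
            \sum_j c' j * PV R (enum_val j) g.
    by apply: eq_bigr => j _; rewrite ylow_lift ffunE.
  have P0 : (c ord0 *: pv R (v1 n) (v2 n)) g = 0.
    rewrite ffunE /pv /incvec ffunE pe_mem; move: Fg; rewrite /Fp => /and3P[nN n01 n12].
    case: ifP => [|_]; last by rewrite scaler0.
    case/or3P => /eqP E.
    - by move: n01; rewrite E set21 set22.
    - by move: n12; rewrite E set21 set22.
    - by move: nN; rewrite E set22.
  by rewrite P0 add0r ffunE.
have stA : forall j : 'I_#|Fset n|, ord0 \notin val (enum_val j) -> v1 n \notin val (enum_val j) -> c' j = 0.
  move=> j g0 g1; have Fg := FsetP j; move: (Fg) => /and3P[gN _ _].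
  apply: (solve2 (coord _ Fg)); last by rewrite PV_self oner_eq0.
  move=> j' ne; have fg : enum_val j' != enum_val j by rewrite (inj_eq enum_val_inj).
  rewrite PV_mem (neq_in g0 (set21 _ _)) (neq_in gN (set22 _ _)) orbF /=.
  rewrite /pa /pb; case: ifP => [i0|n0f].
    by rewrite (neq_in g1 (set22 _ _)) mulr0.
  case: (pp_spec (enum_val j')) => E _ _ _; rewrite -E.
  case: eqP => [/val_inj E'|_]; last by rewrite mulr0.
  by move: fg; rewrite E' eqxx.
have stB : forall j : 'I_#|Fset n|, ord0 \in val (enum_val j) -> c' j = 0.
  move=> j g0; have Fg := FsetP j; move: (Fg) => /and3P[gN g01 _].
  apply: (solve2 (coord _ Fg)); last by rewrite PV_self oner_eq0.
  move=> j' ne; have fg : enum_val j' != enum_val j by rewrite (inj_eq enum_val_inj).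
  set f := enum_val j'.
  case: (boolP ((ord0 \notin val f) && (v1 n \notin val f))) => [/andP[f0 f1]|hf].
    by rewrite stA ?mul0r.
  have Ff := FsetP j'.
  have /and5P[a0 an b0 bn ab] := pab_inner h Ff.
  have o2 : ord0 \notin [set pa f; pb f] by rewrite in_set2 !(eq_sym ord0) negb_or a0 b0.
  rewrite PV_mem (neq_out g0 o2) (neq_in gN (set22 _ _)) orbF /=.
  case: eqP => [E|_]; last by rewrite mulr0.
  move: hf; rewrite /pa in E *; case: ifP E => [i0 E _|n0f E].
    case: (pp_spec f) => Ef _ H0 _; move: Ef; rewrite (H0 i0) -E => /val_inj Ef.
    by case/eqP: fg; exact: Ef.
  rewrite /= => i1; case: (pp_spec f) => _ _ _ H1.
  move: g01; rewrite negb_and g0 /= => n1; move: n1.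
  rewrite -[\val (enum_val j)]/(sval (enum_val j)) E (H1 (negbT n0f) (negbNE i1)).
  by rewrite set22.
have stC : forall j : 'I_#|Fset n|, v1 n \in val (enum_val j) -> ord0 \notin val (enum_val j) -> c' j = 0.
  move=> j g1 g0; have Fg := FsetP j; move: (Fg) => /and3P[gN _ _].
  apply: (solve2 (coord _ Fg)); last by rewrite PV_self oner_eq0.
  move=> j' ne; have fg : enum_val j' != enum_val j by rewrite (inj_eq enum_val_inj).
  set f := enum_val j'.
  case: (boolP (ord0 \in val f)) => [f0|f0]; first by rewrite stB ?mul0r.
  rewrite PV_mem (neq_in g0 (set21 _ _)) (neq_in gN (set22 _ _)) orbF /=.
  rewrite /pa /pb (negbTE f0); case: (pp_spec f) => Ef _ _ _; rewrite -Ef.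
  case: eqP => [/val_inj E'|_]; last by rewrite mulr0.
  by move: fg; rewrite E' eqxx.
have allz : forall j : 'I_#|Fset n|, c' j = 0.
  move=> j; case: (boolP (ord0 \in val (enum_val j))) => [g0|g0]; first exact: stB.
  by case: (boolP (v1 n \in val (enum_val j))) => [g1|g1]; [exact: stC | exact: stA].
have c0 : c ord0 = 0.
  by move: Hs; rewrite big_ord_recl big1 ?addr0 // => i _; exact: allz.
by move=> i; case: (unliftP ord0 i) => [j ->|->] //; exact: allz.
Qed.


Close Scope ring_scope.

Theorem mainTheorem15 (R : realFieldType) (n : nat) (hn : (3 <= n)%N) :
  has_dim (@path_polytope R n 3 (complete_graph n))
          (#|complete_graph n| - n - 2)%N.
Proof.
rewrite (cardE hn).
have -> : (#|Fset n| + 2 + n - n - 2)%N = #|Fset n| by lia.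
split.
  by have [H1 H2] := lower R hn; exists (@ylow R n).
by move=> k y Hy Ha; exact: (upper hn Hy Ha).
Qed.
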